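(* Let $a,b\in\mathbb{N}$ with $b\ge 2$ and $a=b(b-1)$. Then for every integer $k\ge 2$ there exists an integer $H_k\ge1$ (depending on $a,b,k$) such that for every integer $n\ge 0$, the induced subgraph $G_{a,b,a,b-1}[\{n+1,\ldots,n+H_k\}]$ contains a clique on $k$ vertices. In particular $\omega(G_{a,b,a,b-1})=\infty$.
   Context: $\mathbb{N}=\{1,2,\dots\}$. $R_{a,b,a,b-1} := \left\{ \frac{an+b}{an+b-1} : n \in \mathbb{N} \right\}$; $G_{a,b,a,b-1}$ is the graph with vertex set $\mathbb{N}$ and edge set $\{\{m,n\}: m/n\in R_{a,b,a,b-1}\}$. For $W\subseteq\mathbb{N}$, $G[W]$ is the induced subgraph on $W$. $\omega$ denotes clique number. *)

(* Defs.v *)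
From mathcomp Require Import all_boot.
Set Implicit Arguments. Unset Strict Implicit. Unset Printing Implicit Defensive.

(* m / n = (a t + b) / (a t + b - 1) for some t in N = {1,2,...},
   written by cross-multiplication (all denominators positive when b >= 2
   and n >= 1). *)
Definition in_ratio_set (a b m n : nat) : Prop :=
  exists t : nat, 0 < t /\ m * (a * t + b - 1) = n * (a * t + b).

Definition G_edge (a b m n : nat) : Prop :=
  0 < m /\ 0 < n /\ (in_ratio_set a b m n \/ in_ratio_set a b n m).

Definition is_clique (a b : nat) (s : seq nat) : Prop :=
  uniq s /\ forall x y, x \in s -> y \in s -> x != y -> G_edge a b x y.

(* Main.v *)
Require Import Defs.
From mathcomp Require Import all_boot zify.
Set Implicit Arguments. Unset Strict Implicit. Unset Printing Implicit Defensive.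

Lemma coprime_trick m n x y : m %| n * x -> m %| n * y -> coprime x y -> m %| n.
Proof.
move=> h1 h2 cxy.
have : m %| gcdn (n * x) (n * y) by rewrite dvdn_gcd h1 h2.
by rewrite -muln_gcdr (eqP cxy) muln1.
Qed.

Lemma split_b b n : 0 < b -> 0 < n -> exists W N, coprime W b /\ n %| W * b ^ N.
Proof.
move=> b0; elim/ltn_ind: n => n IH n0.
case cnb: (coprime n b).
  by exists n, 0; rewrite expn0 muln1.
have g0 : 0 < gcdn n b by rewrite gcdn_gt0 n0.
have g1 : 1 < gcdn n b.
  by move: cnb g0; rewrite /coprime; case: (gcdn n b) => [|[|]].
have gn : gcdn n b <= n by apply: dvdn_leq => //; apply: dvdn_gcdl.
have lt : n %/ gcdn n b < n by apply: ltn_Pdiv.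
have p : 0 < n %/ gcdn n b by rewrite divn_gt0.
have [W [N [cW dW]]] := IH _ lt p.
exists W, N.+1; split => //.
rewrite -(divnK (dvdn_gcdl n b)) expnSr mulnA.
exact: dvdn_mul dW (dvdn_gcdr n b).
Qed.

Definition S1 (b N : nat) (s : seq nat) := forall x y, x \in s -> y \in s -> 0 < x -> x < y ->
  (b - 1) * (y - x) %| x * b ^ N.
Definition S2 (b top : nat) (s : seq nat) := forall x y, x \in s -> y \in s -> x < y ->
  exists Q, coprime Q b /\ b * (y - x) %| (top - y) * Q.
Definition shape b k s top := [/\ uniq s /\ size s = k, 0 \in s, all (fun x => x <= top) s,
  (exists N, S1 b N s) & S2 b top s].

Lemma shape_base b : shape b 1 [:: 0] 0.
Proof.
split => //; first by exists 0 => x y; rewrite !inE => /eqP -> /eqP ->.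
by move=> x y; rewrite !inE => /eqP -> /eqP ->.
Qed.

Lemma memS u b s x : x \in 0 :: [seq u + b * t | t <- s] ->
  x = 0 \/ (exists2 t, t \in s & x = u + b * t).
Proof. by rewrite inE => /orP [/eqP -> | /mapP [t ts ->]]; [left | right; exists t]. Qed.

Lemma shape_step b k s top : 1 < b -> shape b k s top -> exists s' top', shape b k.+1 s' top'.
Proof.
move=> b1 [[us sz] s0 stop [N h1] h2].
have b0 : 0 < b by lia.
have c0 : 0 < b - 1 by lia.
have [W [M [cW dW]]] := split_b b0 (fact_gt0 top).
have W0 : 0 < W.
  by case: (posnP W) cW => [->|//]; rewrite /coprime gcd0n => /eqP; lia.
set u := (b - 1) * W.
have cu : coprime u b.
  by rewrite /u coprimeMl cW andbT subn1 coprimePn.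
have u0 : 0 < u by rewrite /u muln_gt0 c0 W0.
have stp : forall t, t \in s -> t <= top by move=> t ts; exact: (allP stop).
have dvt : forall t, t \in s -> 0 < t -> t %| W * b ^ M.
  move=> t ts t0; apply: dvdn_trans dW; apply: dvdn_fact; rewrite t0; exact: stp.
exists (0 :: [seq u + b * t | t <- s]), (u + b * top).
split; first split.
- rewrite /= map_inj_uniq ?us ?andbT.
    by apply/mapP => -[t _]; lia.
  by move=> p q /addnI /eqP; rewrite eqn_pmul2l // => /eqP.
- by rewrite /= size_map sz.
- exact: mem_head.
- rewrite /= all_map; apply/allP => t ts /=; rewrite leq_add2l leq_pmul2l //; exact: stp.
- exists (M + N + 1) => x y hx hy x0 xy.
  case: (memS hx) => [ex|[t ts ex]]; first by lia.
  case: (memS hy) => [ey|[t' t's ey]]; first by lia.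
  subst x y.
  have tt' : t < t' by move: xy; rewrite ltn_add2l ltn_pmul2l.
  rewrite subnDl -mulnBr.
  case: (posnP t) => [t0|t0].
    subst t; rewrite muln0 addn0 subn0 /u -mulnA dvdn_pmul2l //.
    have h := dvt t' t's (leq_ltn_trans (leq0n 0) tt').
    apply: (dvdn_trans (_ : _ %| b * (W * b ^ M))); first by rewrite dvdn_pmul2l.
    rewrite mulnCA -expnS; apply: dvdn_mul (dvdnn W) _; apply: dvdn_exp2l; lia.
  have h := h1 t t' ts t's t0 tt'.
  rewrite mulnDl; apply: dvdn_add.
    rewrite /u -mulnA dvdn_pmul2l //.
    have h' : t' - t %| W * b ^ (M + N).
      apply: (dvdn_trans (dvdn_trans (dvdn_mull _ (dvdnn _)) h)).
      by rewrite expnD mulnA dvdn_mul // dvt.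
    rewrite addn1 expnS mulnCA dvdn_pmul2l //.
  rewrite mulnCA -mulnA dvdn_pmul2l //.
  apply: dvdn_trans h _; apply: dvdn_mul (dvdnn t) _; apply: dvdn_exp2l; lia.
- move=> x y hx hy xy.
  case: (memS hx) => [ex|[t ts ex]]; case: (memS hy) => [ey|[t' t's ey]]; subst x y => //.
  + exists (u + b * t'); split.
      by rewrite /coprime gcdnC mulnC addnC gcdnMDl gcdnC.
    rewrite subn0 subnDl -mulnBr -mulnA dvdn_pmul2l //; exact: dvdn_mull.
  + have tt' : t < t' by move: xy; rewrite ltn_add2l ltn_pmul2l.
    have [Q [cQ hQ]] := h2 t t' ts t's tt'.
    exists Q; split => //.
    by rewrite !subnDl -!mulnBr -mulnA dvdn_pmul2l.
Qed.

Lemma shape_all b k : 1 < b -> 0 < k -> exists s top, shape b k s top.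
Proof.
move=> b1; elim: k => // -[|k] IH _.
  by exists [:: 0], 0; exact: shape_base.
have [s [top sh]] := IH isT.
exact: shape_step b1 sh.
Qed.

Lemma edge_of b x y : 1 < b -> x < y -> (b - 1) * (y - x) %| x -> b * (y - x) %| y ->
  (b - 1) * (y - x) < x -> G_edge (b * (b - 1)) b x y /\ G_edge (b * (b - 1)) b y x.
Proof.
move=> b1 xy hc hb hx.
have d0 : 0 < y - x by rewrite subn_gt0.
set d := y - x in hc hb hx d0.
have dx : d %| x by apply: dvdn_trans hc; apply: dvdn_mull.
set q := x %/ d.
have ex : x = q * d by rewrite /q divnK.
have ey : y = q.+1 * d by rewrite mulSn -ex /d subnK // ltnW.
have cq : b - 1 %| q by move: hc; rewrite ex dvdn_pmul2r.
have bq : b %| q.+1 by move: hb; rewrite ey dvdn_pmul2r.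
have qc : b - 1 < q by move: hx; rewrite ex ltn_pmul2r.
have aq : b * (b - 1) %| q - (b - 1).
  rewrite Gauss_dvd; last by rewrite coprime_sym subn1 coprimePn; lia.
  apply/andP; split.
    have -> : q - (b - 1) = q.+1 - b by clear -qc b1; lia.
    exact: dvdn_sub bq (dvdnn b).
  exact: dvdn_sub cq (dvdnn _).
set t := (q - (b - 1)) %/ (b * (b - 1)).
have et : b * (b - 1) * t = q - (b - 1) by rewrite mulnC /t divnK.
have t0 : 0 < t by case: (posnP t) et => [->|//]; rewrite muln0 => /esym /eqP; rewrite subn_eq0 leqNgt qc.
have hr : in_ratio_set (b * (b - 1)) b y x.
  exists t; split => //.
  rewrite et.
  have -> : q - (b - 1) + b - 1 = q by clear -qc b1; lia.
  have -> : q - (b - 1) + b = q.+1 by clear -qc b1; lia.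
  rewrite ex ey; clear; nia.
have x0 : 0 < x by apply: leq_ltn_trans hx.
have y0 : 0 < y by apply: leq_ltn_trans xy.
by split; split => //; split => //; [right | left].
Qed.

Lemma key b s top N W M X x y :
  1 < b -> S1 b N s -> S2 b top s -> all (fun x => x <= top) s -> coprime W b ->
  top`! %| W * b ^ M -> (b - 1) * W %| X -> b ^ (N + M + 1) %| X + top ->
  x \in s -> y \in s -> x < y ->
  (b - 1) * (y - x) %| X + x /\ b * (y - x) %| X + y.
Proof.
move=> b1 h1 h2 stop cW dW hG hB xs ys xy.
set B := b ^ (N + M + 1) in hB *.
set G := (b - 1) * W in hG *.
have b0 : 0 < b by apply: ltnW.
have yt : y <= top by exact: (allP stop).
have d0 : 0 < y - x by rewrite subn_gt0.
have dt : y - x <= top by apply: leq_trans (leq_subr _ _) yt.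
set d := y - x in d0 dt *.
have bB : b %| B by rewrite /B addn1 expnS dvdn_mulr.
have dF : d %| top`! by apply: dvdn_fact; rewrite d0.
have dWB : d %| W * B.
  apply: (dvdn_trans (dvdn_trans dF dW)).
  by apply: dvdn_mul (dvdnn W) _; apply: dvdn_exp2l; lia.
have bdWB : b * d %| W * B.
  apply: (dvdn_trans (_ : _ %| b * (W * b ^ M))).
    by rewrite dvdn_pmul2l // (dvdn_trans dF dW).
  by rewrite mulnCA -expnS; apply: dvdn_mul (dvdnn W) _; apply: dvdn_exp2l; lia.
have cGB : (b - 1) * d %| G * B by rewrite /G -mulnA; apply: dvdn_mul (dvdnn _) dWB.
have bGB : b * d %| G * B by rewrite /G -mulnA; apply: dvdn_mull.
have [Q [cQ hQ]] := h2 x y xs ys xy.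
have cop : coprime (B * B) (Q * G).
  rewrite coprime_sym coprimeMl !coprimeMr /B !coprimeXr //.
  by rewrite /G coprimeMl cW subn1 coprimePn.
have GBX : G * B %| X * B by apply: dvdn_mul hG (dvdnn B).
have GBT : G * B %| (X + top) * (Q * G).
  rewrite mulnCA; apply: dvdn_mull; rewrite [_ * G]mulnC; exact: dvdn_mul (dvdnn G) hB.
have eT : X + top = (X + x) + (top - x) by rewrite -addnA subnKC // ltnW // (leq_trans xy).
have eT' : X + top = (X + y) + (top - y) by rewrite -addnA subnKC.
have bNB : b ^ N %| B * B by apply: dvdn_mulr; apply: dvdn_exp2l; lia.
have dQ : d %| (top - y) * Q by apply: dvdn_trans hQ; apply: dvdn_mull.
split.
- apply: (coprime_trick _ _ cop).
    rewrite mulnDl; apply: dvdn_add; first by rewrite mulnA; apply: dvdn_mulr; exact: dvdn_trans cGB GBX.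
    case: (posnP x) => [->|x0]; first by rewrite mul0n dvdn0.
    apply: dvdn_trans (h1 x y xs ys x0 xy) _; exact: dvdn_mul (dvdnn x) bNB.
  have hT := dvdn_trans cGB GBT.
  rewrite eT mulnDl in hT.
  have H2 : (b - 1) * d %| (top - x) * (Q * G).
    have -> : top - x = (top - y) + d by rewrite /d; clear -xy yt; lia.
    rewrite mulnA mulnC; apply: dvdn_mul; last by rewrite /G; apply: dvdn_mulr.
    by rewrite mulnDl; apply: dvdn_add dQ (dvdn_mulr _ (dvdnn d)).
  by rewrite -(dvdn_addl _ H2).
- apply: (coprime_trick _ _ cop).
    rewrite mulnDl; apply: dvdn_add; first by rewrite mulnA; apply: dvdn_mulr; exact: dvdn_trans bGB GBX.
    have -> : y = x + d by rewrite /d subnKC // ltnW.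
    rewrite mulnDl; apply: dvdn_add; last first.
      by rewrite [d * _]mulnC; apply: dvdn_mul (dvdn_mulr _ bB) (dvdnn d).
    case: (posnP x) => [->|x0]; first by rewrite mul0n dvdn0.
    have hx := dvdn_trans (dvdn_mull _ (dvdnn d)) (h1 x y xs ys x0 xy).
    have -> : x * (B * B) = B * (x * B) by rewrite mulnCA.
    apply: (dvdn_mul bB).
    apply: (dvdn_trans hx); apply: dvdn_mul (dvdnn x) _; rewrite /B; apply: dvdn_exp2l; lia.
  have hT := dvdn_trans bGB GBT.
  rewrite eT' mulnDl in hT.
  have H2 : b * d %| (top - y) * (Q * G) by rewrite mulnA; apply: dvdn_mulr.
  by rewrite -(dvdn_addl _ H2).
Qed.

Lemma arith1 a p q m : a < p -> q * p <= m -> a + p * q.+1 <= m + 2 * p.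
Proof. rewrite mulnSr mulnC; lia. Qed.

Lemma arith2 n c t P X x : n + 1 + c < X -> X <= n + 1 + c + 2 * P -> x <= t ->
  (n + 1 <= X + x) && (X + x <= n + (c + 2 * P + t + 1)).
Proof. move=> *; apply/andP; split; lia. Qed.

Lemma arith3 u v X x : u <= v -> v < X -> u < X + x.
Proof. lia. Qed.

Lemma window b k : 1 < b -> 0 < k -> exists H : nat, 1 <= H /\
  forall n : nat, exists s : seq nat,
    size s = k /\ all (fun x => (n + 1 <= x) && (x <= n + H)) s /\
    is_clique (b * (b - 1)) b s.
Proof.
move=> b1 k0.
have b0 : 0 < b by apply: ltnW.
have [s [top [[us sz] s0 stop [N h1] h2]]] := shape_all b1 k0.
have [W [M [cW dW]]] := split_b b0 (fact_gt0 top).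
set B := b ^ (N + M + 1).
set G := (b - 1) * W.
have W0 : 0 < W by case: (posnP W) cW => [->|//]; rewrite /coprime gcd0n => /eqP; lia.
have B0 : 0 < B by rewrite /B expn_gt0 b0.
have G0 : 0 < G by rewrite /G muln_gt0 W0; lia.
have cop : coprime B G.
  rewrite /B /G coprime_sym coprimeXr // coprimeMl cW subn1 coprimePn //.
set P := B * G.
have P0 : 0 < P by rewrite /P muln_gt0 B0 G0.
set r := chinese B G (top * (B - 1)) 0.
have stp : forall t, t \in s -> t <= top by move=> t ts; exact: (allP stop).
exists ((b - 1) * top + 2 * P + top + 1); split; first by lia.
move=> n.
set m := n + 1 + (b - 1) * top.
set X := r %% P + P * (m %/ P).+1.
have XB : X %% B = r %% B.
  have e : P * (m %/ P).+1 = (G * (m %/ P).+1) * B by rewrite /P -mulnA mulnC.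
  by rewrite /X e addnC modnMDl modn_dvdm // /P dvdn_mulr.
have XG : X %% G = 0.
  have e : P * (m %/ P).+1 = (B * (m %/ P).+1) * G by rewrite /P mulnAC mulnC.
  rewrite /X e addnC modnMDl modn_dvdm; last by rewrite /P dvdn_mull.
  by rewrite /r chinese_modr // mod0n.
have hB : B %| X + top.
  rewrite /dvdn -modnDml XB modnDml -modnDml /r chinese_modl // modnDml.
  by rewrite -mulnSr subn1 prednK // modnMl.
have hG : G %| X by rewrite /dvdn XG.
have Xm : m < X.
  rewrite /X; apply: (leq_trans (ltn_ceil m P0)); rewrite mulnC; exact: leq_addl.
have XM : X <= m + 2 * P by apply: arith1; [exact: ltn_pmod | exact: leq_trunc_div].
exists (map (addn X) s); split; first by rewrite size_map.
split.
  apply/allP => v /mapP [x xs ->]; exact: arith2 Xm XM (stp x xs).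
split; first by rewrite map_inj_uniq //; exact: addnI.
move=> v w /mapP [x xs ->] /mapP [y ys ->] vw.
have hxy : x != y by apply: contraNneq vw => ->.
have gen : forall x y, x \in s -> y \in s -> x < y ->
    G_edge (b * (b - 1)) b (X + x) (X + y) /\ G_edge (b * (b - 1)) b (X + y) (X + x).
  move=> x' y' xs' ys' xy'.
  have [hc hb] := key b1 h1 h2 stop cW dW hG hB xs' ys' xy'.
  apply: edge_of => //; rewrite ?subnDl //; first by rewrite ltn_add2l.
  have yt := stp y' ys'.
  apply: (arith3 (v := (b - 1) * top)); first by apply: leq_mul => //; apply: leq_trans (leq_subr _ _) yt.
  by apply: leq_ltn_trans Xm; rewrite /m leq_addl.
case: (ltngtP x y) => [xy|yx|e]; last by rewrite e eqxx in hxy.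
  exact: (gen x y xs ys xy).1.
exact: (gen y x ys xs yx).2.
Qed.

Theorem proposition3p4 (a b : nat) (hb : 2 <= b) (ha : a = b * (b - 1)) :
  (forall k : nat, 2 <= k ->
     exists H : nat, 1 <= H /\
       forall n : nat, exists s : seq nat,
         size s = k /\ all (fun x => (n + 1 <= x) && (x <= n + H)) s /\
         is_clique a b s)
  /\
  (forall k : nat, exists s : seq nat,
     size s = k /\ all (fun x => 0 < x) s /\ is_clique a b s).
Proof.
subst a; split.
  by move=> k k2; apply: window => //; apply: ltnW.
case=> [|k].
  by exists [::]; split => //; split => //; split => // x y.
have [H [_ hH]] := window hb (ltn0Sn k).
have [s [sz [al cl]]] := hH 0.
exists s; split => //; split => //.
by apply/allP => x xs; have /andP [h _] := allP al x xs.
Qed.
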